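(* Assume the standing setup below. Let $s$ be a real number such that for some index $i$ with $1\le i\le k$ we have $s_i\le s$ and $s+r<s_{i+1}$. Then: (1) the simplicial complex $V_s(X)(y)$ is connected (and nonempty); (2) the function $\pi_0V_s(X)\to\pi_0V_s(Y)$, $[x]_{s,X}\mapsto[x]_{s,Y}$, induced by the inclusion $V_s(X)\subseteq V_s(Y)$, is a bijection.
   Context: For a finite set $Z\subset\mathbb{R}^n$ and a real number $s\ge 0$, the Vietoris–Rips complex $V_s(Z)$ is the simplicial complex with vertex set $Z$ whose simplices are the nonempty subsets $\sigma\subseteq Z$ with $d(z,z')\le s$ for all $z,z'\in\sigma$ ($d$ the Euclidean distance). For $z\in Z$, $[z]_{s,Z}\subseteq Z$ denotes the set of vertices of the path component of $V_s(Z)$ containing $z$. Standing setup: $X\subset\mathbb{R}^n$ is a finite set with at least two points, $y\in\mathbb{R}^n\setminus X$, $Y=X\sqcup\{y\}$. The phase change numbers of $X$ are the distinct values $0=s_0<s_1<\dots<s_k$ of $d(x,x')$ for $x,x'\in X$; set $s_{k+1}=+\infty$. There are $x_0\in X$ and a real $r>0$ with $d(y,x_0)<r$ and $r<s_{i+1}-s_i$ for all $0\le i<k$. For $s\ge0$, $V_s(X)(y)$ denotes the full subcomplex of $V_s(X)$ on the set of vertices $x\in X$ with $[x]_{s,Y}=[y]_{s,Y}$ (a full subcomplex on a vertex set $W$ consists of all simplices whose vertices all lie in $W$). *)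

(* Defs.v *)
(* points of R^n are row vectors 'rV[R]_n over a real closed
   field R (R = the reals is the intended instance). *)
From HB Require Import structures.
From mathcomp Require Import all_boot all_order all_algebra.
Set Implicit Arguments. Unset Strict Implicit. Unset Printing Implicit Defensive.
Import Order.TTheory GRing.Theory Num.Theory.
Local Open Scope ring_scope.

Definition dist {R : rcfType} {n : nat} (x y : 'rV[R]_n) : R :=
  Num.sqrt (\sum_(i < n) (x ord0 i - y ord0 i) ^+ 2).

(* A simplicial complex on vertices of type V, given by its set of simplices
   (a simplex is represented by a finite list of its vertices). *)
Definition complex (V : Type) := seq V -> Prop.

Definition VR {R : rcfType} {n : nat} (s : R) (Z : seq 'rV[R]_n)
  : complex 'rV[R]_n :=
  fun sigma => sigma <> [::] /\ {subset sigma <= Z} /\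
    (forall a b, a \in sigma -> b \in sigma -> dist a b <= s).

Fixpoint chain {V : Type} (K : complex V) (u : V) (p : seq V) : Prop :=
  match p with
  | [::] => True
  | v :: p' => K [:: u; v] /\ chain K v p'
  end.

Definition ppath {V : Type} (K : complex V) (u v : V) : Prop :=
  K [:: u] /\ exists p : seq V, chain K u p /\ last u p = v.

Definition comp {V : Type} (K : complex V) (u : V) : V -> Prop :=
  fun v => ppath K u v.

Definition cls {R : rcfType} {n : nat} (s : R) (Z : seq 'rV[R]_n)
  (z : 'rV[R]_n) : 'rV[R]_n -> Prop := comp (VR s Z) z.

Definition full {V : eqType} (K : complex V) (W : V -> Prop) : complex V :=
  fun sigma => K sigma /\ (forall v, v \in sigma -> W v).

Definition VsXy {R : rcfType} {n : nat} (s : R) (X : seq 'rV[R]_n)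
  (y : 'rV[R]_n) : complex 'rV[R]_n :=
  full (VR s X) (fun x => cls s (y :: X) x = cls s (y :: X) y).

Definition connected {V : Type} (K : complex V) : Prop :=
  (exists v, K [:: v]) /\ (forall u v, K [:: u] -> K [:: v] -> ppath K u v).

(* C is an element of pi_0 K *)
Definition isComp {V : Type} (K : complex V) (C : V -> Prop) : Prop :=
  exists x, K [:: x] /\ C = comp K x.

(* The assignment [x]_{K1} |-> [x]_{K2} (x a vertex of K1) is a well-defined
   function pi_0 K1 -> pi_0 K2, and it is a bijection. *)
Definition pi0_induced_bijective {V : Type} (K1 K2 : complex V) : Prop :=
  let rel := fun C D => exists x, K1 [:: x] /\ C = comp K1 x /\ D = comp K2 x in
  (forall C, isComp K1 C ->
     exists D, [/\ isComp K2 D, rel C D & forall D', rel C D' -> D' = D]) /\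
  (forall D, isComp K2 D ->
     exists C, [/\ isComp K1 C, rel C D &
                   forall C', isComp K1 C' -> rel C' D -> C' = C]).

(* phase change numbers s_0 < s_1 < ... < s_k of X, as a sorted list *)
Definition phase {R : rcfType} {n : nat} (X : seq 'rV[R]_n) : seq R :=
  sort <=%R (undup [seq dist a b | a <- X, b <- X]).

(* Main.v *)
Require Import Defs.
From HB Require Import structures.
From mathcomp Require Import all_boot all_order all_algebra.
From mathcomp Require Import ring lra.
From Stdlib Require Import FunctionalExtensionality PropExtensionality.
Import Order.TTheory GRing.Theory Num.Theory.
Local Open Scope ring_scope.

Section Metric.
Variables (R : rcfType) (n : nat).

Lemma cs (a b : 'I_n -> R) :
  \sum_i a i * b i <= Num.sqrt (\sum_i a i ^+ 2) * Num.sqrt (\sum_i b i ^+ 2).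
Proof.
set A := \sum_i a i ^+ 2; set B := \sum_i b i ^+ 2.
have A0 : 0 <= A by apply: sumr_ge0 => i _; exact: sqr_ge0.
have B0 : 0 <= B by apply: sumr_ge0 => i _; exact: sqr_ge0.
set al := Num.sqrt A; set be := Num.sqrt B.
have al0 : 0 <= al := sqrtr_ge0 _.
have be0 : 0 <= be := sqrtr_ge0 _.
have alA : al ^+ 2 = A := sqr_sqrtr A0.
have beB : be ^+ 2 = B := sqr_sqrtr B0.
have key : 2 * (\sum_i a i * b i) * (al * be) <= A * be ^+ 2 + B * al ^+ 2.
  rewrite /A /B !mulr_suml -big_split /= mulr_sumr mulr_suml.
  apply: ler_sum => i _.
  have := sqr_ge0 (a i * be - b i * al); nra.
rewrite alA beB in key.
have [al_0|] := eqVneq al 0.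
  have : A = 0 by rewrite -alA al_0 expr0n.
  move/eqP; rewrite psumr_eq0 => [/allP H|i _]; last exact: sqr_ge0.
  rewrite big1 ?mulr_ge0 // => i _.
  have /H : i \in index_enum 'I_n by rewrite mem_index_enum.
  by rewrite /= sqrf_eq0 => /eqP ->; rewrite mul0r.
move=> aln0.
have [be_0|ben0] := eqVneq be 0.
  have : B = 0 by rewrite -beB be_0 expr0n.
  move/eqP; rewrite psumr_eq0 => [/allP H|i _]; last exact: sqr_ge0.
  rewrite big1 ?mulr_ge0 // => i _.
  have /H : i \in index_enum 'I_n by rewrite mem_index_enum.
  by rewrite /= sqrf_eq0 => /eqP ->; rewrite mulr0.
have p : 0 < al * be by rewrite mulr_gt0 // lt0r ?aln0 ?ben0.
rewrite -alA -beB in key.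
nra.
Qed.

Lemma dist_triangle (x y z : 'rV[R]_n) : dist x z <= dist x y + dist y z.
Proof.
rewrite /dist.
set a := fun i : 'I_n => x ord0 i - y ord0 i.
set b := fun i : 'I_n => y ord0 i - z ord0 i.
have E : \sum_(i < n) (x ord0 i - z ord0 i) ^+ 2 =
   \sum_i a i ^+ 2 + 2 * (\sum_i a i * b i) + \sum_i b i ^+ 2.
  rewrite mulr_sumr -!big_split /=; apply: eq_bigr => i _; rewrite /a /b; ring.
have := cs a b.
rewrite E.
set A := \sum_i a i ^+ 2; set B := \sum_i b i ^+ 2; set S := \sum_i a i * b i.
have A0 : 0 <= A by apply: sumr_ge0 => i _; exact: sqr_ge0.
have B0 : 0 <= B by apply: sumr_ge0 => i _; exact: sqr_ge0.
move=> H.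
have al0 := sqrtr_ge0 A; have be0 := sqrtr_ge0 B.
have alA := sqr_sqrtr A0; have beB := sqr_sqrtr B0.
rewrite -(ger0_norm (addr_ge0 al0 be0)) -sqrtr_sqr ler_sqrt; last exact: sqr_ge0.
nra.
Qed.

Lemma dist_sym (x y : 'rV[R]_n) : dist x y = dist y x.
Proof. by rewrite /dist; congr Num.sqrt; apply: eq_bigr => i _; rewrite -sqrrN opprB. Qed.

Lemma dist_xx (x : 'rV[R]_n) : dist x x = 0.
Proof. by rewrite /dist big1 ?sqrtr0 // => i _; rewrite subrr expr0n. Qed.

Lemma dist_ge0 (x y : 'rV[R]_n) : 0 <= dist x y.
Proof. exact: sqrtr_ge0. Qed.
End Metric.
Arguments dist_triangle {R n}. Arguments dist_sym {R n}. Arguments dist_xx {R n}. Arguments dist_ge0 {R n}.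

Section Cx.
Variable V : eqType.
Definition dclosed (K : complex V) := forall sigma tau : seq V,
  K sigma -> tau <> [::] -> {subset tau <= sigma} -> K tau.

Variable K : complex V.
Hypothesis Kc : dclosed K.

Lemma edge_sym u v : K [:: u; v] -> K [:: v; u].
Proof. move=> H; apply: (Kc _ _ H) => // w; rewrite !inE; by rewrite orbC. Qed.
Lemma edge_l u v : K [:: u; v] -> K [:: u].
Proof. move=> H; apply: (Kc _ _ H) => // w; rewrite !inE; by move=> ->. Qed.
Lemma edge_r u v : K [:: u; v] -> K [:: v].
Proof. move=> H; apply: (Kc _ _ H) => // w; rewrite !inE; by move=> ->; rewrite orbT. Qed.

Arguments edge_sym {u v}. Arguments edge_l {u v}. Arguments edge_r {u v}.

Lemma chain_cat u p q : chain K u (p ++ q) <-> chain K u p /\ chain K (last u p) q.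
Proof.
elim: p u => [|v p IH] u /=; first tauto.
rewrite IH; tauto.
Qed.

Lemma ppath_refl u : K [:: u] -> ppath K u u.
Proof. by move=> H; split => //; exists [::]. Qed.

Lemma ppath_edge u v : K [:: u; v] -> ppath K u v.
Proof. move=> H; split; first exact: edge_l H. by exists [:: v]. Qed.

Lemma ppath_trans u v w : ppath K u v -> ppath K v w -> ppath K u w.
Proof.
move=> [Hu [p [Hp Hl]]] [_ [q [Hq Hl']]]; split => //.
exists (p ++ q); rewrite chain_cat last_cat Hl; split => //; split => //.

Qed.

Lemma ppath_end u v : ppath K u v -> K [:: v].
Proof.
move=> [Hu [p [Hp <-]]]; elim: p u Hu Hp => [|w p IH] u Hu //= [Hw Hp].
exact: IH _ (edge_r Hw) Hp.
Qed.

Arguments ppath_trans {u v w}. Arguments ppath_edge {u v}.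
Lemma ppath_sym u v : ppath K u v -> ppath K v u.
Proof.
move=> [Hu [p [Hp <-]]]; elim: p u Hu Hp => [|w p IH] u Hu /= Hp.
  exact: ppath_refl.
case: Hp => Hw Hp.
apply: ppath_trans (IH _ (edge_r Hw) Hp) _.
exact: ppath_edge (edge_sym Hw).
Qed.

Arguments ppath_sym {u v}. Arguments ppath_end {u v}.

Lemma comp_eq u v : ppath K u v -> Defs.comp K u = Defs.comp K v.
Proof.
move=> H; apply: functional_extensionality => w.
apply: propositional_extensionality; rewrite /Defs.comp; split => H'.
  exact: ppath_trans (ppath_sym H) H'.
exact: ppath_trans H H'.
Qed.

Lemma comp_eq_ppath u v : K [:: v] -> Defs.comp K u = Defs.comp K v -> ppath K u v.
Proof. move=> Hv E; have : Defs.comp K v v by exact: ppath_refl. by rewrite -E. Qed.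
End Cx.
Arguments dclosed {V}.

Lemma chain_mono V (K1 K2 : complex V) :
  (forall s, K1 s -> K2 s) -> forall u p, chain K1 u p -> chain K2 u p.
Proof. move=> H u p; elim: p u => [|v p IH] u //= [? ?]; split; auto. Qed.

Lemma ppath_mono V (K1 K2 : complex V) :
  (forall s, K1 s -> K2 s) -> forall u v, ppath K1 u v -> ppath K2 u v.
Proof.
move=> H u v [Hu [p [Hp Hl]]]; split; auto; exists p; split => //.
exact: chain_mono Hp.
Qed.

Lemma ppath_map V (K1 K2 : complex V) (f : V -> V) :
  (forall u, K1 [:: u] -> K2 [:: f u]) ->
  (forall u v, K1 [:: u; v] -> K2 [:: f u; f v]) ->
  forall u v, ppath K1 u v -> ppath K2 (f u) (f v).
Proof.
move=> H1 H2 u v [Hu [p [Hp <-]]]; split; auto.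
exists (map f p); rewrite last_map; split => //.
elim: p u {Hu} Hp {H1} => [|w p IH] u //= [Hw Hp]; split; auto.
Qed.

Lemma chain_full (V : eqType) (K : complex V) (P : V -> Prop) u p :
  P u -> (forall a b, K [:: a; b] -> P a -> P b) -> chain K u p ->
  chain (full K P) u p.
Proof.
move=> Pu HP; elim: p u Pu => [|w p IH] u Pu //= [Hw Hp].
have Pw := HP _ _ Hw Pu.
split; last exact: IH.
split => // v; rewrite !inE => /orP[] /eqP ->.
by [].
by [].
Qed.

Lemma VR_dclosed (R : rcfType) n (s : R) (Z : seq 'rV[R]_n) : dclosed (VR s Z).
Proof.
move=> sig tau [_ [Hs Hd]] Ht Hsub; split => //; split.
  by move=> v /Hsub /Hs.
by move=> a b /Hsub Ha /Hsub Hb; apply: Hd.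
Qed.

Lemma full_dclosed (V : eqType) (K : complex V) P : dclosed K -> dclosed (full K P).
Proof.
move=> Kc sig tau [Ks HP] Ht Hsub; split; first exact: Kc _ _ Ks Ht Hsub.
by move=> v /Hsub /HP.
Qed.
Arguments ppath_sym {V K} Kc {u v}.
Arguments ppath_trans {V K u v w}.
Arguments ppath_edge {V K} Kc {u v}.
Arguments ppath_refl {V K u}.
Arguments comp_eq {V K} Kc {u v}.
Arguments comp_eq_ppath {V K u v}.
Arguments ppath_mono {V K1 K2}.
Arguments chain_full {V K P u p}.

Section Ph.
Variables (R : rcfType) (n : nat) (X : seq 'rV[R]_n).

Lemma ph_mem a b : a \in X -> b \in X -> dist a b \in phase X.
Proof. by move=> Ha Hb; rewrite /phase mem_sort mem_undup; apply: allpairs_f. Qed.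

Lemma ph_ge0 d : d \in phase X -> 0 <= d.
Proof.
by rewrite /phase mem_sort mem_undup => /allpairsP [[a b] [_ _ ->]]; exact: dist_ge0.
Qed.

Lemma ph_mono j k : (j <= k)%N -> (k < size (phase X))%N ->
  nth 0 (phase X) j <= nth 0 (phase X) k.
Proof.
move=> jk ks; apply: (sorted_leq_nth le_trans lexx) => //.
- exact: sort_le_sorted.
- by rewrite inE (leq_ltn_trans jk).
Qed.
End Ph.

Lemma VR_vert (R : rcfType) n (s : R) (Z : seq 'rV[R]_n) u :
  0 <= s -> u \in Z -> VR s Z [:: u].
Proof.
move=> s0 uZ; split => //; split; first by move=> v; rewrite inE => /eqP ->.
by move=> a b; rewrite !inE => /eqP -> /eqP ->; rewrite dist_xx.
Qed.

Lemma VR_vert_inv (R : rcfType) n (s : R) (Z : seq 'rV[R]_n) u :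
  VR s Z [:: u] -> u \in Z.
Proof. by move=> [_ [H _]]; apply: H; rewrite inE. Qed.

Lemma VR_edge (R : rcfType) n (s : R) (Z : seq 'rV[R]_n) u v :
  0 <= s -> u \in Z -> v \in Z -> dist u v <= s -> VR s Z [:: u; v].
Proof.
move=> s0 uZ vZ d; split => //; split.
  by move=> w; rewrite !inE => /orP[] /eqP ->.
by move=> a b; rewrite !inE => /orP[] /eqP -> /orP[] /eqP ->;
  rewrite ?dist_xx // dist_sym.
Qed.

Lemma VR_edge_inv (R : rcfType) n (s : R) (Z : seq 'rV[R]_n) u v :
  VR s Z [:: u; v] -> [/\ u \in Z, v \in Z & dist u v <= s].
Proof.
move=> [_ [H1 H2]]; split; first (by apply: H1; rewrite !inE eqxx);
  first (by apply: H1; rewrite !inE eqxx orbT).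
by apply: H2; rewrite !inE eqxx ?orbT.
Qed.

Lemma VR_mono (R : rcfType) n (s : R) (X : seq 'rV[R]_n) y sig :
  VR s X sig -> VR s (y :: X) sig.
Proof.
move=> [H1 [H2 H3]]; split => //; split => // v /H2 vX.
by rewrite inE vX orbT.
Qed.
Arguments ph_mono {R n X j k}. Arguments ph_mem {R n X a b}. Arguments ph_ge0 {R n X d}.
Arguments VR_vert {R n s Z u}. Arguments VR_vert_inv {R n s Z u}. Arguments VR_edge {R n s Z u v}. Arguments VR_edge_inv {R n s Z u v}.

Theorem lemma11 (R : rcfType) (n : nat) (X : seq 'rV[R]_n) (y x0 : 'rV[R]_n)
  (r s : R) (i : nat) :
  uniq X -> (1 < size X)%N -> y \notin X ->
  x0 \in X -> 0 < r -> dist y x0 < r ->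
  (forall j, (j.+1 < size (phase X))%N ->
     r < nth 0 (phase X) j.+1 - nth 0 (phase X) j) ->
  (0 < i)%N -> (i < size (phase X))%N ->
  nth 0 (phase X) i <= s ->
  ((i.+1 < size (phase X))%N -> s + r < nth 0 (phase X) i.+1) ->
  connected (VsXy s X y) /\ pi0_induced_bijective (VR s X) (VR s (y :: X)).
Proof.
move=> _ _ yX x0X r0 dyx0 gap i0 isz si si1.
set P := phase X.
have Psz : (1 < size P)%N by apply: leq_ltn_trans isz.
have P0 : 0 <= nth 0 P 0 by apply: ph_ge0; apply: mem_nth; apply: ltnW.
have P1 : r < nth 0 P 1 by have := gap 0%N Psz; lra.
have P1i : nth 0 P 1 <= nth 0 P i by apply: ph_mono.
have rs : r < s by lra.
have s0 : 0 <= s by lra.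
have Ls : forall z, z \in X -> dist y z <= s -> dist x0 z <= s.
  move=> z zX dz.
  have dm : dist x0 z \in P by apply: ph_mem.
  have dlt : dist x0 z < r + s.
    have := dist_triangle x0 y z; rewrite (dist_sym x0 y); lra.
  have jsz : (index (dist x0 z) P < size P)%N by rewrite index_mem.
  have nj := nth_index 0 dm.
  case: (leqP (index (dist x0 z) P) i) => ji.
    by rewrite -nj; apply: le_trans si; apply: ph_mono.
  have i1 : (i.+1 < size P)%N by apply: leq_ltn_trans jsz.
  have := ph_mono ji jsz; rewrite nj; have := si1 i1; lra.
set K1 := VR s X; set K2 := VR s (y :: X).
have K1c : dclosed K1 by apply: VR_dclosed.
have K2c : dclosed K2 by apply: VR_dclosed.
have m12 : forall sig, K1 sig -> K2 sig by move=> sig; apply: VR_mono.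
have pm12 := ppath_mono m12.
pose f z := if z == y then x0 else z.
have fX : forall x, x \in X -> f x = x.
  move=> x xX; rewrite /f; case: eqP => // exy; by rewrite -exy xX in yX.
have fin : forall u, u \in y :: X -> f u \in X.
  by move=> u; rewrite inE /f; case: eqP.
have proj : forall a b, ppath K2 a b -> ppath K1 (f a) (f b).
  apply: ppath_map.
    by move=> u /VR_vert_inv /fin; apply: VR_vert.
  move=> u v /VR_edge_inv [uY vY duv]; apply: VR_edge => //; try exact: fin.
  rewrite /f; case: eqP => [eu|nu]; case: eqP => [ev|nv].
  - by rewrite dist_xx.
  - apply: Ls; last by rewrite -eu.
    by move: vY; rewrite inE => /orP[/eqP //|].
  - rewrite dist_sym; apply: Ls; last by rewrite -ev dist_sym.
    by move: uY; rewrite inE => /orP[/eqP //|].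
  - by [].
have eyx0 : K2 [:: y; x0].
  by apply: VR_edge; rewrite ?inE ?eqxx ?x0X ?orbT //; lra.
have pyx0 : ppath K2 y x0 := ppath_edge K2c eyx0.
have toX : forall x, x \in X -> ppath K2 y x -> ppath K1 x0 x.
  move=> x xX H; have := proj _ _ H; rewrite (fX x xX).
  by rewrite {1}/f eqxx.
split.
  set W := fun x => cls s (y :: X) x = cls s (y :: X) y.
  have Wx0 : W x0.
    by rewrite /W /cls; apply: (comp_eq K2c); apply: (ppath_sym K2c pyx0).
  have HW : forall a b, K1 [:: a; b] -> W a -> W b.
    move=> a b Hab; rewrite /W /cls => <-; symmetry.
    by apply: (comp_eq K2c); apply: pm12; apply: (ppath_edge K1c).
  have lift : forall x, ppath K1 x0 x -> ppath (VsXy s X y) x0 x.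
    move=> x [Hu [p [Hp Hl]]]; split.
      split => // v; rewrite inE => /eqP ->; exact: Wx0.
    exists p; split => //; exact: chain_full Wx0 HW Hp.
  have Vc : dclosed (VsXy s X y) by apply: full_dclosed.
  have reach : forall u, VsXy s X y [:: u] -> ppath (VsXy s X y) x0 u.
    move=> u [Hu Hw]; apply: lift; apply: toX; first exact: VR_vert_inv Hu.
    have Wu : W u by apply: Hw; rewrite inE.
    apply: comp_eq_ppath => //; first exact: m12.
  split.
    exists x0; split; first exact: VR_vert.
    by move=> v; rewrite inE => /eqP ->.
  move=> u v Hu Hv.
  exact: ppath_trans (ppath_sym Vc (reach _ Hu)) (reach _ Hv).
split.
  move=> C [x [Hx ->]].
  exists (Defs.comp K2 x); split.
  - by exists x; split => //; apply: m12.
  - by exists x.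
  - move=> D' [x' [Hx' [E ->]]].
    apply: (comp_eq K2c); apply: pm12; apply: (ppath_sym K1c).
    exact: comp_eq_ppath E.
move=> D [z [Hz ->]].
have zY := VR_vert_inv Hz.
have pzf : ppath K2 z (f z).
  rewrite /f; case: eqP => [->|_]; first exact: pyx0.
  exact: ppath_refl.
have fzK1 : K1 [:: f z] by apply: VR_vert => //; apply: fin.
exists (Defs.comp K1 (f z)); split.
- by exists (f z).
- by exists (f z); split => //; split => //; apply: (comp_eq K2c).
- move=> C' [x' [Hx' ->]] [x'' [Hx'' [E1 E2]]].
  rewrite E1; apply: (comp_eq K1c).
  have : ppath K2 x'' (f z).
    apply: comp_eq_ppath => //; first exact: m12.
    by rewrite -E2; apply: (comp_eq K2c).
  move/proj; rewrite (fX x'' (VR_vert_inv Hx'')).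
  by rewrite (fX (f z) (fin z zY)).
Qed.
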